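(* Let $p$ be one of $(123,\{0\},\{1\})$, $(123,\{0\},\{3\})$, $(132,\{0\},\{1\})$, $(132,\{0\},\{3\})$, $(132,\{1\},\{3\})$, $(132,\{2\},\{3\})$, $(132,\{3\},\{3\})$, or any pattern in the same symmetry class as one of these. Then for all $n\ge1$, \[a_n(p)=(n-1)!\Big(1+\sum_{k=1}^{n-1}\frac1k\Big).\]
   Context: For $n\ge1$, $\mathcal S_n$ is the set of permutations $\pi=\pi_1\cdots\pi_n$ of $[n]$. A bi-vincular pattern of length $k$ is a triple $p=(\sigma,X,Y)$ with $\sigma\in\mathcal S_k$ and $X,Y\subseteq\{0,1,\dots,k\}$. A permutation $\pi\in\mathcal S_n$ contains $p$ if there are indices $1\le i_1<\dots<i_k\le n$ such that $(\pi_{i_1},\dots,\pi_{i_k})$ is order-isomorphic to $\sigma$ and, letting $j_1<\dots<j_k$ be the values $\pi_{i_1},\dots,\pi_{i_k}$ sorted increasingly and setting $i_0=j_0=0$, $i_{k+1}=j_{k+1}=n+1$, one has $i_{x+1}=i_x+1$ for all $x\in X$ and $j_{y+1}=j_y+1$ for all $y\in Y$. Otherwise $\pi$ avoids $p$; $a_n(p)$ is the number of $\pi\in\mathcal S_n$ avoiding $p$. Symmetries: $p^{i}=(\sigma^{-1},Y,X)$, $p^{r}=(\sigma^{r},\{k-x:x\in X\},Y)$, $p^{c}=(\sigma^{c},X,\{k-y:y\in Y\})$ with $\sigma^r_j=\sigma_{k+1-j}$, $\sigma^c_j=k+1-\sigma_j$; the symmetry class of $p$ consists of all patterns obtained from $p$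 by finitely many applications of these maps. *)

(* Defs.v *)
From HB Require Import structures.
From mathcomp Require Import all_boot all_order all_algebra all_fingroup.
Set Implicit Arguments. Unset Strict Implicit. Unset Printing Implicit Defensive.

(* A bi-vincular pattern of length k: (sigma, X, Y) with sigma in S_k
   (0-based: 'I_k), and X, Y subsets of {0,...,k} (= 'I_k.+1). *)
Definition bvpat (k : nat) : Type :=
  ({perm 'I_k} * {set 'I_k.+1} * {set 'I_k.+1})%type.

Definition bv_sigma k (p : bvpat k) : {perm 'I_k} := p.1.1.
Definition bv_X k (p : bvpat k) : {set 'I_k.+1} := p.1.2.
Definition bv_Y k (p : bvpat k) : {set 'I_k.+1} := p.2.

(* The 1-based positions i_1<..<i_k are (f a).+1,
   extended by i_0 = 0, i_{k+1} = n+1; similarly the 1-based values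
   pi_{i_a} = (pi (f a)).+1 sorted increasingly, extended by j_0 = 0,
   j_{k+1} = n+1. *)
Definition pos_ext k n (f : {ffun 'I_k -> 'I_n}) : seq nat :=
  0 :: [seq (f a).+1 | a <- enum 'I_k] ++ [:: n.+1].

Definition val_ext k n (pi : {perm 'I_n}) (f : {ffun 'I_k -> 'I_n}) : seq nat :=
  0 :: sort leq [seq (pi (f a)).+1 | a <- enum 'I_k] ++ [:: n.+1].

Definition occurrence k n (pi : {perm 'I_n}) (p : bvpat k)
    (f : {ffun 'I_k -> 'I_n}) : bool :=
  [&& [forall a : 'I_k, forall b : 'I_k, (a < b) ==> (f a < f b)],
      [forall a : 'I_k, forall b : 'I_k,
          (pi (f a) < pi (f b)) == (bv_sigma p a < bv_sigma p b)],
      [forall x in bv_X p,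
          nth 0 (pos_ext f) x.+1 == (nth 0 (pos_ext f) x).+1] &
      [forall y in bv_Y p,
          nth 0 (val_ext pi f) y.+1 == (nth 0 (val_ext pi f) y).+1]].

Definition contains k n (pi : {perm 'I_n}) (p : bvpat k) : bool :=
  [exists f : {ffun 'I_k -> 'I_n}, occurrence pi p f].

Definition avoiders_count k (p : bvpat k) (n : nat) : nat :=
  #|[set pi : {perm 'I_n} | ~~ contains pi p]|.

Definition rev_perm k : {perm 'I_k} := perm (@rev_ord_inj k).

(* (s * t) x = t (s x) in mathcomp *)
Definition sym_i k (p : bvpat k) : bvpat k :=
  ((bv_sigma p)^-1%g, bv_Y p, bv_X p).
(* sigma^r_j = sigma_{k+1-j};  X -> {k - x} *)
Definition sym_r k (p : bvpat k) : bvpat k :=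
  ((rev_perm k * bv_sigma p)%g, [set rev_ord x | x in bv_X p], bv_Y p).
(* sigma^c_j = k+1-sigma_j;  Y -> {k - y} *)
Definition sym_c k (p : bvpat k) : bvpat k :=
  ((bv_sigma p * rev_perm k)%g, bv_X p, [set rev_ord y | y in bv_Y p]).

Inductive in_sym_class k (p : bvpat k) : bvpat k -> Prop :=
  | isc_refl : in_sym_class p p
  | isc_i q : in_sym_class p q -> in_sym_class p (sym_i q)
  | isc_r q : in_sym_class p q -> in_sym_class p (sym_r q)
  | isc_c q : in_sym_class p q -> in_sym_class p (sym_c q).

Definition perm123 : {perm 'I_3} := 1%g.
Definition perm132 : {perm 'I_3} := tperm (inord 1) (inord 2).

Definition s3 (x : nat) : {set 'I_4} := [set (inord x : 'I_4)].

Definition base_patterns : seq (bvpat 3) :=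
  [:: (perm123, s3 0, s3 1); (perm123, s3 0, s3 3);
      (perm132, s3 0, s3 1); (perm132, s3 0, s3 3);
      (perm132, s3 1, s3 3); (perm132, s3 2, s3 3);
      (perm132, s3 3, s3 3)].

(* Main.v *)
Require Import Defs.
From HB Require Import structures.
From mathcomp Require Import all_boot all_order all_algebra all_fingroup.
From mathcomp Require Import zify.
Import GRing.Theory.
Set Implicit Arguments. Unset Strict Implicit. Unset Printing Implicit Defensive.
Definition o0 : 'I_3 := @Ordinal 3 0 isT.
Definition o1 : 'I_3 := @Ordinal 3 1 isT.
Definition o2 : 'I_3 := @Ordinal 3 2 isT.

Lemma enum3 : enum 'I_3 = [:: o0; o1; o2].
Proof. by apply: (inj_map val_inj); rewrite val_enum_ord. Qed.

Lemma pos_extE n (f : {ffun 'I_3 -> 'I_n}) :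
  pos_ext f = [:: 0; (f o0).+1; (f o1).+1; (f o2).+1; n.+1].
Proof. by rewrite /pos_ext enum3. Qed.

Definition iso3 n (pi : {perm 'I_n}) (s : {perm 'I_3}) (f : 'I_3 -> 'I_n) :=
  [forall a : 'I_3, forall b : 'I_3, (pi (f a) < pi (f b)) == (s a < s b)].

Lemma val_extE n (pi : {perm 'I_n}) (s : {perm 'I_3}) (f : {ffun 'I_3 -> 'I_n}) :
  iso3 pi s f ->
  val_ext pi f = [:: 0; (pi (f (s^-1 o0)%g)).+1; (pi (f (s^-1 o1)%g)).+1;
                     (pi (f (s^-1 o2)%g)).+1; n.+1].
Proof.
move=> /forallP iso; rewrite /val_ext.
have isoP a b : (pi (f a) < pi (f b)) = (s a < s b) by have /forallP/(_ b)/eqP := iso a.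
suff -> : sort leq [seq (pi (f a)).+1 | a <- enum 'I_3] =
   [seq (pi (f a)).+1 | a <- [seq (s^-1)%g b | b <- enum 'I_3]] by rewrite enum3.
apply: (sorted_eq leq_trans anti_leq); first exact: (sort_sorted leq_total).
  by rewrite enum3 /= !ltnS !andbT; apply/andP; split; apply: ltnW; rewrite isoP !permKV.
rewrite perm_sort; apply: perm_map.
apply: uniq_perm; first exact: enum_uniq.
  by rewrite map_inj_uniq ?enum_uniq //; exact: perm_inj.
move=> x; rewrite mem_enum; apply/esym/mapP; exists (s x); first by rewrite mem_enum.
by rewrite permK.
Qed.

Definition posL n (f : 'I_3 -> 'I_n) : seq nat :=
  [:: 0; (f o0).+1; (f o1).+1; (f o2).+1; n.+1].
Definition valL n (pi : {perm 'I_n}) (s : {perm 'I_3}) (f : 'I_3 -> 'I_n) : seq nat :=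
  [:: 0; (pi (f (s^-1 o0)%g)).+1; (pi (f (s^-1 o1)%g)).+1;
                     (pi (f (s^-1 o2)%g)).+1; n.+1].
Definition incr3 n (f : 'I_3 -> 'I_n) :=
  [forall a : 'I_3, forall b : 'I_3, (a < b) ==> (f a < f b)].

Lemma occurrenceE n (pi : {perm 'I_n}) (p : bvpat 3) (f : {ffun 'I_3 -> 'I_n}) :
  occurrence pi p f = [&& incr3 f, iso3 pi (bv_sigma p) f,
     [forall x in bv_X p, nth 0 (posL f) x.+1 == (nth 0 (posL f) x).+1] &
     [forall y in bv_Y p, nth 0 (valL pi (bv_sigma p) f) y.+1
                            == (nth 0 (valL pi (bv_sigma p) f) y).+1]].
Proof.
rewrite /occurrence pos_extE /incr3.
have [iso|] := boolP (iso3 pi (bv_sigma p) f); last first.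
  by rewrite /iso3 => /negbTE ->; rewrite !andbF.
rewrite (val_extE iso); move: iso; rewrite /iso3 => ->; reflexivity.
Qed.

Lemma incr3P n (f : 'I_3 -> 'I_n) : incr3 f -> forall a b, (f a < f b) = (a < b).
Proof.
move=> /forallP H a b.
have H' : forall a b : 'I_3, a < b -> f a < f b.
  by move=> c d cd; have /forallP/(_ d) := H c; rewrite cd.
case: (ltngtP a b) => ab; first by rewrite H'.
  by apply/negbTE; rewrite -leqNgt ltnW // H'.
by rewrite (val_inj ab) ltnn.
Qed.

Lemma rev_permE k x : rev_perm k x = rev_ord x.
Proof. by rewrite /rev_perm permE. Qed.

Lemma rev_permV k : ((rev_perm k)^-1 = rev_perm k)%g.
Proof. by apply/permP => x; apply: (@perm_inj _ (rev_perm k)); rewrite permKV !rev_permE rev_ordK. Qed.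

Lemma rev_ord_o (x : 'I_3) : val (rev_ord x) = 2 - x.
Proof. by []. Qed.

Lemma rev_o0 : rev_ord o0 = o2. Proof. exact: val_inj. Qed.
Lemma rev_o1 : rev_ord o1 = o1. Proof. exact: val_inj. Qed.
Lemma rev_o2 : rev_ord o2 = o0. Proof. exact: val_inj. Qed.

Lemma occ_r n (pi : {perm 'I_n}) (p : bvpat 3) (f : {ffun 'I_3 -> 'I_n}) : occurrence pi p f ->
  occurrence (rev_perm n * pi)%g (sym_r p) [ffun a => rev_ord (f (rev_ord a))].
Proof.
rewrite !occurrenceE => /and4P [inc iso hx hy].
set f' := [ffun a => _].
apply/and4P; split.
- apply/forallP => a; apply/forallP => b; apply/implyP => ab.
  rewrite !ffunE /=.
  have : f (rev_ord b) < f (rev_ord a) by rewrite (incr3P inc) /=; have := ltn_ord a; have := ltn_ord b; lia.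
  have := ltn_ord (f (rev_ord a)); have := ltn_ord (f (rev_ord b)); lia.
- apply/forallP => a; apply/forallP => b; rewrite /= !ffunE !permM !rev_permE !rev_ordK.
  by have /forallP/(_ (rev_ord b)) := (forallP iso (rev_ord a)).
- apply/forallP => y; apply/implyP => /imsetP [x xX ->].
  have := forallP hx x; rewrite xX /= /posL !ffunE rev_o0 rev_o1 rev_o2.
  have := ltn_ord (f o0); have := ltn_ord (f o1); have := ltn_ord (f o2).
  case: x xX => [[|[|[|[|]]]] ?] //= _; lia.
- have -> : valL (rev_perm n * pi) (bv_sigma (sym_r p)) f' = valL pi (bv_sigma p) f.
    by rewrite /valL /= !invMg !permM rev_permV !rev_permE !ffunE !rev_ordK.
  exact: hy.
Qed.

Lemma ltn_rev n (x y : 'I_n) : (rev_ord x < rev_ord y) = (y < x).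
Proof. have := ltn_ord x; have := ltn_ord y; rewrite /= => hx hy; apply/idP/idP; lia. Qed.

Lemma occ_c n (pi : {perm 'I_n}) (p : bvpat 3) (f : {ffun 'I_3 -> 'I_n}) : occurrence pi p f ->
  occurrence (pi * rev_perm n)%g (sym_c p) f.
Proof.
rewrite !occurrenceE => /and4P [inc iso hx hy].
apply/and4P; split => //.
- apply/forallP => a; apply/forallP => b; rewrite /= !permM !rev_permE !ltn_rev.
  by have /forallP/(_ a) := (forallP iso b).
- apply/forallP => y; apply/implyP => /imsetP [x xX ->].
  have := forallP hy x; rewrite xX /= /valL /= !invMg !permM rev_permV !rev_permE rev_o0 rev_o1 rev_o2.
  set u0 := pi (f _); set u1 := pi (f _); set u2 := pi (f _).
  have := ltn_ord u0; have := ltn_ord u1; have := ltn_ord u2.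
  case: x xX => [[|[|[|[|]]]] ?] //= _; lia.
Qed.

Lemma occ_i n (pi : {perm 'I_n}) (p : bvpat 3) (f : {ffun 'I_3 -> 'I_n}) : occurrence pi p f ->
  occurrence (pi^-1)%g (sym_i p) [ffun b => pi (f ((bv_sigma p)^-1 b)%g)].
Proof.
rewrite !occurrenceE => /and4P [inc iso hx hy].
set f' := [ffun b => _].
have isoP a b : (pi (f a) < pi (f b)) = (bv_sigma p a < bv_sigma p b).
  by have /forallP/(_ b)/eqP := forallP iso a.
apply/and4P; split.
- apply/forallP => a; apply/forallP => b; apply/implyP => ab.
  by rewrite !ffunE isoP !permKV.
- apply/forallP => a; apply/forallP => b; rewrite /= !ffunE !permK.
  by rewrite (incr3P inc).
- have -> : posL f' = valL pi (bv_sigma p) f by rewrite /posL /valL !ffunE.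
  exact: hy.
- have -> : valL pi^-1 (bv_sigma (sym_i p)) f' = posL f.
    by rewrite /posL /valL /= invgK !ffunE !permK.
  exact: hx.
Qed.
Lemma sym_count n (S : bvpat 3 -> bvpat 3) (T : {perm 'I_n} -> {perm 'I_n}) :
  (forall p, S (S p) = p) -> (forall x, T (T x) = x) ->
  (forall pi p, contains pi p -> contains (T pi) (S p)) ->
  forall p, avoiders_count (S p) n = avoiders_count p n.
Proof.
move=> SS TT H p; rewrite /avoiders_count.
have inj : injective T by apply: (can_inj TT).
rewrite -(card_preimset [set x | ~~ contains x p] inj).
apply: eq_card => x; rewrite !inE; congr negb.
apply/idP/idP => h.
  by rewrite -(SS p); apply: H.
by rewrite -(TT x); apply: H.
Qed.

Lemma revrev k : (rev_perm k * rev_perm k = 1)%g.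
Proof. by rewrite -{1}rev_permV mulVg. Qed.

Lemma imset_revrev k (X : {set 'I_k}) : [set rev_ord x | x in [set rev_ord x | x in X]] = X.
Proof. by rewrite -imset_comp (eq_imset _ (@rev_ordK _)) imset_id. Qed.

Lemma cont_r n (pi : {perm 'I_n}) (p : bvpat 3) : contains pi p -> contains (rev_perm n * pi)%g (sym_r p).
Proof. by move=> /existsP [f hf]; apply/existsP; eexists; apply: occ_r hf. Qed.
Lemma cont_c n (pi : {perm 'I_n}) (p : bvpat 3) : contains pi p -> contains (pi * rev_perm n)%g (sym_c p).
Proof. by move=> /existsP [f hf]; apply/existsP; eexists; apply: occ_c hf. Qed.
Lemma cont_i n (pi : {perm 'I_n}) (p : bvpat 3) : contains pi p -> contains (pi^-1)%g (sym_i p).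
Proof. by move=> /existsP [f hf]; apply/existsP; eexists; apply: occ_i hf. Qed.

Lemma count_r n (p : bvpat 3) : avoiders_count (sym_r p) n = avoiders_count p n.
Proof.
apply: (@sym_count n _ (fun x => rev_perm n * x)%g).
- by case=> [[s X] Y]; rewrite /sym_r /= mulgA revrev mul1g imset_revrev.
- by move=> x; rewrite mulgA revrev mul1g.
- exact: cont_r.
Qed.
Lemma count_c n (p : bvpat 3) : avoiders_count (sym_c p) n = avoiders_count p n.
Proof.
apply: (@sym_count n _ (fun x => x * rev_perm n)%g).
- by case=> [[s X] Y]; rewrite /sym_c /= -mulgA revrev mulg1 imset_revrev.
- by move=> x; rewrite -mulgA revrev mulg1.
- exact: cont_c.
Qed.
Lemma count_i n (p : bvpat 3) : avoiders_count (sym_i p) n = avoiders_count p n.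
Proof.
apply: (@sym_count n _ (fun x => x^-1)%g).
- by case=> [[s X] Y]; rewrite /sym_i /= invgK.
- by move=> x; rewrite invgK.
- exact: cont_i.
Qed.

Lemma count_class (p0 p : bvpat 3) n : in_sym_class p0 p -> avoiders_count p n = avoiders_count p0 n.
Proof. by elim=> // q _ IH; rewrite ?count_r ?count_c ?count_i. Qed.

Definition mk3 n (i0 i1 i2 : 'I_n) : {ffun 'I_3 -> 'I_n} :=
  [ffun b : 'I_3 => nth i0 [:: i0; i1; i2] b].

Lemma mk3_0 n (i0 i1 i2 : 'I_n) : mk3 i0 i1 i2 o0 = i0. Proof. by rewrite ffunE. Qed.
Lemma mk3_1 n (i0 i1 i2 : 'I_n) : mk3 i0 i1 i2 o1 = i1. Proof. by rewrite ffunE. Qed.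
Lemma mk3_2 n (i0 i1 i2 : 'I_n) : mk3 i0 i1 i2 o2 = i2. Proof. by rewrite ffunE. Qed.

Lemma ord3_cases (b : 'I_3) : [\/ b = o0, b = o1 | b = o2].
Proof. by case: b => [[|[|[|]]] ?] //; [constructor 1|constructor 2|constructor 3]; apply: val_inj. Qed.

Lemma containsE3 n (pi : {perm 'I_n}) (p : bvpat 3) :
  contains pi p = [exists i0, exists i1, exists i2, occurrence pi p (mk3 i0 i1 i2)].
Proof.
apply/existsP/existsP => [[f hf]|[i0 /existsP [i1 /existsP [i2 h]]]]; last by exists (mk3 i0 i1 i2).
exists (f o0); apply/existsP; exists (f o1); apply/existsP; exists (f o2).
suff -> : mk3 (f o0) (f o1) (f o2) = f by [].
by apply/ffunP => b; case: (ord3_cases b) => ->; rewrite ?mk3_0 ?mk3_1 ?mk3_2.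
Qed.

Lemma incr3_mk3 n (i0 i1 i2 : 'I_n) : incr3 (mk3 i0 i1 i2) = (i0 < i1 < i2).
Proof.
apply/idP/idP.
  move=> /forallP H; have /forallP/(_ o1) := H o0; have /forallP/(_ o2) := H o1.
  by rewrite !ffunE /= => -> ->.
move=> /andP [h1 h2]; apply/forallP => a; apply/forallP => b; apply/implyP.
rewrite !ffunE.
by case: (ord3_cases a) => ->; case: (ord3_cases b) => -> //= _; rewrite ?h1 ?h2 ?(ltn_trans h1 h2).
Qed.

Lemma iso3_gen n (pi : {perm 'I_n}) (s : {perm 'I_3}) (g : 'I_3 -> 'I_n) :
  iso3 pi s g = [forall a : 'I_3, forall b : 'I_3, (pi (g a) < pi (g b)) == (s a < s b)].
Proof. by []. Qed.

Lemma perm132E : perm132 = tperm o1 o2.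
Proof. by rewrite /perm132; congr tperm; apply: val_inj; rewrite /= inordK. Qed.

Lemma forall_set1 (T : finType) (a : T) (P : pred T) : [forall x in [set a], P x] = P a.
Proof.
apply/forallP/idP => [/(_ a)|h x]; first by rewrite inE eqxx.
by rewrite inE; apply/implyP => /eqP ->.
Qed.

Lemma iso123 n (pi : {perm 'I_n}) (g : 'I_3 -> 'I_n) :
  iso3 pi perm123 g = (pi (g o0) < pi (g o1)) && (pi (g o1) < pi (g o2)).
Proof.
apply/idP/idP.
  move=> /forallP H; have /forallP/(_ o1)/eqP := H o0; have /forallP/(_ o2)/eqP := H o1.
  by rewrite /perm123 !perm1 /= => -> ->.
move=> /andP [h1 h2]; apply/forallP => a; apply/forallP => b; rewrite /perm123 !perm1.
have h3 := ltn_trans h1 h2.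
case: (ord3_cases a) => ->; case: (ord3_cases b) => -> /=; apply/eqP;
  rewrite ?ltnn ?h1 ?h2 ?h3 //; apply/negbTE; rewrite -leqNgt ltnW //.
Qed.

Lemma iso132 n (pi : {perm 'I_n}) (g : 'I_3 -> 'I_n) :
  iso3 pi (tperm o1 o2) g = (pi (g o0) < pi (g o2)) && (pi (g o2) < pi (g o1)).
Proof.
have e0 : tperm o1 o2 o0 = o0 by rewrite tpermD.
have e1 : tperm o1 o2 o1 = o2 by rewrite tpermL.
have e2 : tperm o1 o2 o2 = o1 by rewrite tpermR.
apply/idP/idP.
  move=> /forallP H; have /forallP/(_ o2)/eqP := H o0; have /forallP/(_ o1)/eqP := H o2.
  by rewrite e0 e1 e2 /= => -> ->.
move=> /andP [h1 h2]; apply/forallP => a; apply/forallP => b.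
have h3 := ltn_trans h1 h2.
case: (ord3_cases a) => ->; case: (ord3_cases b) => -> /=; rewrite ?e0 ?e1 ?e2 /=; apply/eqP;
  rewrite ?ltnn ?h1 ?h2 ?h3 //; apply/negbTE; rewrite -leqNgt ltnW //.
Qed.

Definition p1 : bvpat 3 := (perm123, s3 0, s3 1).
Definition p2 : bvpat 3 := (perm123, s3 0, s3 3).
Definition p3 : bvpat 3 := (perm132, s3 0, s3 1).
Definition p4 : bvpat 3 := (perm132, s3 0, s3 3).
Definition p5 : bvpat 3 := (perm132, s3 1, s3 3).
Definition p6 : bvpat 3 := (perm132, s3 2, s3 3).
Definition p7 : bvpat 3 := (perm132, s3 3, s3 3).

Lemma inord1E : (inord 1 : 'I_3) = o1. Proof. by apply: val_inj; rewrite /= inordK. Qed.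
Lemma inord2E : (inord 2 : 'I_3) = o2. Proof. by apply: val_inj; rewrite /= inordK. Qed.

Ltac occ_simpl :=
  rewrite /p1 /p2 /p3 /p4 /p5 /p6 /p7 ?perm132E occurrenceE incr3_mk3 ?iso123 ?iso132 /bv_X /bv_Y /= /s3 !forall_set1 /posL /valL !inordK //=;
  rewrite ?inord1E ?inord2E ?perm132E ?tpermV /perm123 ?invg1 ?perm1 ?tpermL ?tpermR ?tpermD // ?mk3_0 ?mk3_1 ?mk3_2.

Lemma occ_p1 n (pi : {perm 'I_n}) i0 i1 i2 : occurrence pi p1 (mk3 i0 i1 i2) =
  [&& i0 < i1 < i2, (pi i0 < pi i1) && (pi i1 < pi i2), val i0 == 0 & val (pi i1) == (pi i0).+1].
Proof. by occ_simpl. Qed.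
Lemma occ_p2 n (pi : {perm 'I_n}) i0 i1 i2 : occurrence pi p2 (mk3 i0 i1 i2) =
  [&& i0 < i1 < i2, (pi i0 < pi i1) && (pi i1 < pi i2), val i0 == 0 & n == (pi i2).+1].
Proof. by occ_simpl. Qed.
Lemma occ_p3 n (pi : {perm 'I_n}) i0 i1 i2 : occurrence pi p3 (mk3 i0 i1 i2) =
  [&& i0 < i1 < i2, (pi i0 < pi i2) && (pi i2 < pi i1), val i0 == 0 & val (pi i2) == (pi i0).+1].
Proof. by occ_simpl. Qed.
Lemma occ_p4 n (pi : {perm 'I_n}) i0 i1 i2 : occurrence pi p4 (mk3 i0 i1 i2) =
  [&& i0 < i1 < i2, (pi i0 < pi i2) && (pi i2 < pi i1), val i0 == 0 & n == (pi i1).+1].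
Proof. by occ_simpl. Qed.
Lemma occ_p5 n (pi : {perm 'I_n}) i0 i1 i2 : occurrence pi p5 (mk3 i0 i1 i2) =
  [&& i0 < i1 < i2, (pi i0 < pi i2) && (pi i2 < pi i1), val i1 == i0.+1 & n == (pi i1).+1].
Proof. by occ_simpl. Qed.
Lemma occ_p6 n (pi : {perm 'I_n}) i0 i1 i2 : occurrence pi p6 (mk3 i0 i1 i2) =
  [&& i0 < i1 < i2, (pi i0 < pi i2) && (pi i2 < pi i1), val i2 == i1.+1 & n == (pi i1).+1].
Proof. by occ_simpl. Qed.
Lemma occ_p7 n (pi : {perm 'I_n}) i0 i1 i2 : occurrence pi p7 (mk3 i0 i1 i2) =
  [&& i0 < i1 < i2, (pi i0 < pi i2) && (pi i2 < pi i1), n == i2.+1 & n == (pi i1).+1].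
Proof. by occ_simpl. Qed.

Lemma sum_bool (I : finType) (S : {set I}) (b : pred I) :
  \sum_(s in S) (b s : nat) = #|[set s in S | b s]|.
Proof.
rewrite -sum1_card [RHS]big_mkcond [LHS]big_mkcond /=; apply: eq_bigr => s _.
by rewrite inE; case: (s \in S); case: (b s).
Qed.

Lemma part_count (T I : finType) (A : {set T}) (S : {set I}) (F : I -> {set T}) w :
  (forall x, x \in A -> #|[set s in S | x \in F s]| = 1) ->
  (forall s, s \in S -> F s \subset A) ->
  (forall s s', s \in S -> s' \in S -> #|F s| <= #|F s'|) ->
  w \in S -> #|A| = #|S| * #|F w|.
Proof.
move=> Hp Hs Hc wS.
have -> : #|A| = \sum_(x in A) \sum_(s in S) (x \in F s).
  rewrite -sum1_card; apply: eq_bigr => x xA.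
  by rewrite -(Hp x xA) -sum_bool.
rewrite exchange_big /= -sum_nat_const; apply: eq_bigr => s sS.
have -> : #|F w| = #|F s| by apply/eqP; rewrite eqn_leq !Hc.
rewrite (sum_bool A (fun x => x \in F s)); apply: eq_card => x; rewrite inE.
by case: (boolP (x \in F s)) => h; rewrite ?andbT ?andbF // (subsetP (Hs s sS)).
Qed.

Lemma key_count n (A : {set {perm 'I_n}}) (S : {set 'I_n})
  (key : {perm 'I_n} -> 'I_n -> nat)
  (tr : 'I_n -> 'I_n -> {perm 'I_n} -> {perm 'I_n}) w :
  w \in S ->
  (forall pi u v, key pi u = key pi v -> u = v) ->
  (forall s s' pi, s \in S -> s' \in S -> pi \in A -> tr s s' pi \in A) ->
  (forall s s' pi v, key (tr s s' pi) v = key pi (tperm s s' v)) ->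
  (forall s s', injective (tr s s')) ->
  #|A| = #|S| * #|[set pi in A | [forall v in S, key pi v <= key pi w]]|.
Proof.
move=> wS Hk HA Htr Hinj.
pose F s := [set pi in A | [forall v in S, key pi v <= key pi s]].
apply: (part_count (F := F)) => //.
- move=> pi piA.
  case: (@arg_maxnP _ w (mem S) (key pi) wS) => s0 s0S Hs0.
  rewrite -(cards1 s0); apply: eq_card => s; rewrite !inE piA /=.
  apply/andP/eqP.
    move=> [sS /forallP Hs]; apply: (Hk pi); apply/eqP; rewrite eqn_leq.
    have h1 : key pi s <= key pi s0 by exact: (Hs0 s sS).
    by have /implyP/(_ s0S) -> := Hs s0; rewrite h1.
  move=> ->; split => //; apply/forallP => v; apply/implyP => vS; exact: (Hs0 v vS).
- by move=> s _; apply/subsetP => pi; rewrite inE => /andP[].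
- move=> s s' sS s'S.
  rewrite -(card_imset (F s) (Hinj s s')); apply: subset_leq_card.
  apply/subsetP => x /imsetP [pi piF ->]; move: piF; rewrite inE => /andP [piA /forallP Hpi].
  rewrite inE HA //=; apply/forallP => v; apply/implyP => vS.
  rewrite !Htr tpermR.
  have tS : tperm s s' v \in S by case: tpermP.
  by have /implyP/(_ tS) := Hpi (tperm s s' v).
Qed.

Lemma card_fix_val n (i0 a : 'I_n.+1) : #|[set pi : {perm 'I_n.+1} | pi i0 == a]| = n`!.
Proof.
have := @part_count _ _ [set: {perm 'I_n.+1}] [set: 'I_n.+1]
  (fun s => [set pi : {perm 'I_n.+1} | pi i0 == s]) a.
rewrite !cardsT card_Sn card_ord factS => H.
apply/eqP; rewrite -(eqn_pmul2l (ltn0Sn n)); apply/eqP; symmetry; apply: H => //.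
- move=> pi _; rewrite -(cards1 (pi i0)); apply: eq_card => s; rewrite !inE.
  by rewrite eq_sym.
- move=> s s' _ _.
  rewrite -(card_imset _ (mulIg (tperm s s'))); apply: subset_leq_card.
  apply/subsetP => x /imsetP [pi piF ->]; move: piF; rewrite !inE permM => /eqP ->.
  by rewrite tpermL.
Qed.

Lemma card_fix_pos n (q v : 'I_n.+1) : #|[set pi : {perm 'I_n.+1} | pi q == v]| = n`!.
Proof.
have := @part_count _ _ [set: {perm 'I_n.+1}] [set: 'I_n.+1]
  (fun s => [set pi : {perm 'I_n.+1} | pi s == v]) q.
rewrite !cardsT card_Sn card_ord factS => H.
apply/eqP; rewrite -(eqn_pmul2l (ltn0Sn n)); apply/eqP; symmetry; apply: H => //.
- move=> pi _; rewrite -(cards1 (pi^-1 v)%g); apply: eq_card => s; rewrite !inE.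
  apply/eqP/eqP => [<-|->]; by rewrite ?permK ?permKV.
- move=> s s' _ _.
  rewrite -(card_imset _ (mulgI (tperm s s'))); apply: subset_leq_card.
  apply/subsetP => x /imsetP [pi piF ->]; move: piF; rewrite !inE permM.
  by rewrite tpermR.
Qed.

Lemma piece_val n (P : pred {perm 'I_n.+1}) (a w : 'I_n.+1) (S : {set 'I_n.+1}) (g : nat -> nat) :
  w \in S -> a \notin S ->
  (forall x y, x < n.+1 -> y < n.+1 -> g x = g y -> x = y) ->
  (forall pi : {perm 'I_n.+1}, pi ord0 = a -> P pi = [forall v in S, g ((pi^-1)%g v) <= g ((pi^-1)%g w)]) ->
  #|[set pi | P pi && (pi ord0 == a)]| * #|S| = n`!.
Proof.
move=> wS aS Hg HP.
have := @key_count _ [set pi : {perm 'I_n.+1} | pi ord0 == a] S (fun pi v => g ((pi^-1)%g v))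
  (fun s s' pi => pi * tperm s s')%g w wS.
rewrite card_fix_val => ->.
- rewrite mulnC; congr (_ * _); apply: eq_card => pi; rewrite !inE.
  by case e: (pi ord0 == a); rewrite ?andbF // andbT (HP _ (eqP e)).
- move=> pi u v /Hg; rewrite !ltn_ord => /(_ isT isT) /val_inj; exact: perm_inj.
- move=> s s' pi sS s'S; rewrite !inE permM => /eqP ->.
  by rewrite tpermD //; apply/eqP => e; move: aS; rewrite -e ?sS ?s'S.
- by move=> s s' pi v; rewrite invMg tpermV permM.
- move=> s s'; exact: mulIg.
Qed.

Lemma piece_pos n (P : pred {perm 'I_n.+1}) (q w : 'I_n.+1) (S : {set 'I_n.+1}) (g : nat -> nat) :
  w \in S -> q \notin S ->
  (forall x y, x < n.+1 -> y < n.+1 -> g x = g y -> x = y) ->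
  (forall pi : {perm 'I_n.+1}, pi q = ord_max -> P pi = [forall j in S, g (pi j) <= g (pi w)]) ->
  #|[set pi | P pi && (pi q == ord_max)]| * #|S| = n`!.
Proof.
move=> wS qS Hg HP.
have := @key_count _ [set pi : {perm 'I_n.+1} | pi q == ord_max] S (fun pi j => g (pi j))
  (fun s s' pi => tperm s s' * pi)%g w wS.
rewrite card_fix_pos => ->.
- rewrite mulnC; congr (_ * _); apply: eq_card => pi; rewrite !inE.
  by case e: (pi q == ord_max); rewrite ?andbF // andbT (HP _ (eqP e)).
- move=> pi u v /Hg; rewrite !ltn_ord => /(_ isT isT) /val_inj; exact: perm_inj.
- move=> s s' pi sS s'S; rewrite !inE permM.
  by rewrite tpermD //; apply/eqP => e; move: qS; rewrite -e ?sS ?s'S.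
- by move=> s s' pi v; rewrite permM.
- move=> s s'; exact: mulgI.
Qed.

Lemma split_val n (P : pred {perm 'I_n.+1}) :
  #|[set pi | P pi]| = \sum_(c < n.+1) #|[set pi | P pi && (pi ord0 == c)]|.
Proof.
rewrite -sum1_card (partition_big (fun pi : {perm 'I_n.+1} => pi ord0) predT) //=.
apply: eq_bigr => c _; rewrite -sum1_card; apply: eq_bigl => pi; by rewrite !inE.
Qed.

Lemma split_pos n (P : pred {perm 'I_n.+1}) :
  #|[set pi | P pi]| = \sum_(c < n.+1) #|[set pi | P pi && (pi c == ord_max)]|.
Proof.
rewrite -sum1_card (partition_big (fun pi : {perm 'I_n.+1} => (pi^-1)%g ord_max) predT) //=.
apply: eq_bigr => c _; rewrite -sum1_card; apply: eq_bigl => pi; rewrite !inE.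
congr (_ && _); apply/eqP/eqP => [<-|<-]; by rewrite ?permKV ?permK.
Qed.

Lemma card_setE m (P : pred nat) : #|[set j : 'I_m | P j]| = \sum_(0 <= j < m) P j.
Proof.
rewrite big_mkord (eq_bigl (fun i => i \in [set: 'I_m])); last by move=> i; rewrite inE.
rewrite (sum_bool [set: 'I_m] (fun j : 'I_m => P j)); apply: eq_card => j.
by rewrite !inE.
Qed.

Lemma card_gt n (a : 'I_n.+1) : #|[set v : 'I_n.+1 | a < v]| = n - a.
Proof.
rewrite (card_setE _ (fun v => a < v)).
suff H : forall m, \sum_(0 <= j < m) (a < j) = m - a.+1 by rewrite H subSS.
elim=> [|m IH]; first by rewrite big_geq.
by rewrite big_nat_recr //= IH; case: ltnP => h /=; lia.
Qed.

Lemma card_lt m q : q <= m -> #|[set j : 'I_m | j < q]| = q.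
Proof.
move=> hq; rewrite (card_setE _ (fun j => j < q)).
suff H : forall k, \sum_(0 <= j < k) (j < q) = minn k q by rewrite H; lia.
elim=> [|k IH]; first by rewrite big_geq // min0n.
by rewrite big_nat_recr //= IH; case: (ltnP k q) => h /=; lia.
Qed.

Lemma avoid_p1 n (pi : {perm 'I_n.+1}) (a w : 'I_n.+1) : pi ord0 = a -> val w = a.+1 ->
  ~~ contains pi p1 = [forall v in [set v : 'I_n.+1 | a < v], ((pi^-1)%g v : nat) <= (pi^-1)%g w].
Proof.
move=> ha /= hw; rewrite containsE3; apply/idP/idP.
- move=> H; apply/forallP => v; apply/implyP; rewrite inE => av.
  rewrite leqNgt; apply/negP => lt; apply: (negP H).
  apply/existsP; exists ord0; apply/existsP; exists (pi^-1 w)%g; apply/existsP; exists (pi^-1 v)%g.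
  rewrite occ_p1 !permKV ha /=.
  have vw : v != w by apply/eqP => e; move: lt; rewrite e ltnn.
  have w0 : (pi^-1 w)%g != ord0.
    apply/eqP => e; have : pi ((pi^-1)%g w) = pi ord0 by rewrite e.
    by rewrite permKV ha => ew; move: hw; rewrite ew /=; lia.
  move: vw w0; rewrite -!val_eqE /= => vw w0.
  rewrite hw eqxx andbT; apply/andP; split; apply/andP; split; lia.
- move=> /forallP H; apply/negP => /existsP [i0 /existsP [i1 /existsP [i2]]].
  rewrite occ_p1 => /and4P [/andP [h01 h12] /andP [p01 p12] /eqP e0 /eqP e1].
  have i00 : i0 = ord0 by apply: val_inj.
  subst i0; rewrite ha in p01 e1.
  have e1' : pi i1 = w by apply: val_inj; rewrite /= e1 hw.
  have := H (pi i2); rewrite inE (_ : a < pi i2); last by lia.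
  by rewrite implyTb -e1' !permK leqNgt h12.
Qed.

Lemma avoid_p2 n (pi : {perm 'I_n.+1}) (a : 'I_n.+1) : pi ord0 = a ->
  ~~ contains pi p2 = [forall v in [set v : 'I_n.+1 | a < v],
       n - (pi^-1)%g v <= n - (pi^-1)%g (ord_max : 'I_n.+1)].
Proof.
move=> ha; set w : 'I_n.+1 := ord_max; rewrite containsE3; apply/idP/idP.
- move=> H; apply/forallP => v; apply/implyP; rewrite inE => av.
  rewrite leqNgt; apply/negP => lt; apply: (negP H).
  apply/existsP; exists ord0; apply/existsP; exists (pi^-1 v)%g; apply/existsP; exists (pi^-1 w)%g.
  rewrite occ_p2 !permKV ha /=.
  have vw : v != w by apply/eqP => e; move: lt; rewrite e ltnn.
  have v0 : (pi^-1 v)%g != ord0.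
    apply/eqP => e; have : pi ((pi^-1)%g v) = pi ord0 by rewrite e.
    by rewrite permKV ha => ev; move: av; rewrite ev ltnn.
  have := ltn_ord ((pi^-1)%g v); have := ltn_ord ((pi^-1)%g w); have := ltn_ord v.
  move: vw v0 lt; rewrite -!val_eqE /= => vw v0 lt.
  rewrite eqxx andbT; move=> *; apply/andP; split; apply/andP; split; lia.
- move=> /forallP H; apply/negP => /existsP [i0 /existsP [i1 /existsP [i2]]].
  rewrite occ_p2 => /and4P [/andP [h01 h12] /andP [p01 p12] /eqP e0 /eqP e1].
  have i00 : i0 = ord0 by apply: val_inj.
  subst i0; rewrite ha in p01.
  have e1' : pi i2 = w by apply: val_inj => /=; lia.
  have := H (pi i1); rewrite inE p01 implyTb -e1' !permK.
  have := ltn_ord i1; have := ltn_ord i2; lia.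
Qed.

Lemma avoid_p3 n (pi : {perm 'I_n.+1}) (a w : 'I_n.+1) : pi ord0 = a -> val w = a.+1 ->
  ~~ contains pi p3 = [forall v in [set v : 'I_n.+1 | a < v], n - (pi^-1)%g v <= n - (pi^-1)%g w].
Proof.
move=> ha /= hw; rewrite containsE3; apply/idP/idP.
- move=> H; apply/forallP => v; apply/implyP; rewrite inE => av.
  rewrite leqNgt; apply/negP => lt; apply: (negP H).
  apply/existsP; exists ord0; apply/existsP; exists (pi^-1 v)%g; apply/existsP; exists (pi^-1 w)%g.
  rewrite occ_p3 !permKV ha /=.
  have vw : v != w by apply/eqP => e; move: lt; rewrite e ltnn.
  have v0 : (pi^-1 v)%g != ord0.
    apply/eqP => e; have : pi ((pi^-1)%g v) = pi ord0 by rewrite e.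
    by rewrite permKV ha => ev; move: av; rewrite ev ltnn.
  have := ltn_ord ((pi^-1)%g v); have := ltn_ord ((pi^-1)%g w); have := ltn_ord v.
  move: vw v0 lt; rewrite -!val_eqE /= => vw v0 lt.
  rewrite hw eqxx andbT; move=> *; apply/andP; split; apply/andP; split; lia.
- move=> /forallP H; apply/negP => /existsP [i0 /existsP [i1 /existsP [i2]]].
  rewrite occ_p3 => /and4P [/andP [h01 h12] /andP [p02 p21] /eqP e0 /eqP e1].
  have i00 : i0 = ord0 by apply: val_inj.
  subst i0; rewrite ha in p02 e1.
  have e1' : pi i2 = w by apply: val_inj; rewrite /= e1 hw.
  have := H (pi i1); rewrite inE (_ : a < pi i1); last by lia.
  rewrite implyTb -e1' !permK.
  have := ltn_ord i1; have := ltn_ord i2; lia.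
Qed.

Lemma avoid_p4 n (pi : {perm 'I_n.+1}) (a : 'I_n.+1) : pi ord0 = a ->
  ~~ contains pi p4 = [forall v in [set v : 'I_n.+1 | a < v],
       ((pi^-1)%g v : nat) <= (pi^-1)%g (ord_max : 'I_n.+1)].
Proof.
move=> ha; set w : 'I_n.+1 := ord_max; rewrite containsE3; apply/idP/idP.
- move=> H; apply/forallP => v; apply/implyP; rewrite inE => av.
  rewrite leqNgt; apply/negP => lt; apply: (negP H).
  apply/existsP; exists ord0; apply/existsP; exists (pi^-1 w)%g; apply/existsP; exists (pi^-1 v)%g.
  rewrite occ_p4 !permKV ha /=.
  have vw : v != w by apply/eqP => e; move: lt; rewrite e ltnn.
  have w0 : (pi^-1 w)%g != ord0.
    apply/eqP => e; have : pi ((pi^-1)%g w) = pi ord0 by rewrite e.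
    rewrite permKV ha => ew; move: av; rewrite -ew /=; have := ltn_ord v; lia.
  have := ltn_ord ((pi^-1)%g v); have := ltn_ord ((pi^-1)%g w); have := ltn_ord v.
  move: vw w0 lt; rewrite -!val_eqE /= => vw w0 lt.
  rewrite eqxx andbT; move=> *; apply/andP; split; apply/andP; split; lia.
- move=> /forallP H; apply/negP => /existsP [i0 /existsP [i1 /existsP [i2]]].
  rewrite occ_p4 => /and4P [/andP [h01 h12] /andP [p02 p21] /eqP e0 /eqP e1].
  have i00 : i0 = ord0 by apply: val_inj.
  subst i0; rewrite ha in p02.
  have e1' : pi i1 = w by apply: val_inj => /=; lia.
  have := H (pi i2); rewrite inE p02 implyTb -e1' !permK.
  lia.
Qed.

Lemma perm_max n (pi : {perm 'I_n.+1}) (q j : 'I_n.+1) : pi q = ord_max -> j != q -> pi j < n.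
Proof.
move=> hq jq; have := ltn_ord (pi j); rewrite ltnS leq_eqVlt => /orP [|//] /eqP e.
have : pi j = pi q by apply: val_inj; rewrite hq /= e.
by move/perm_inj => e'; move: jq; rewrite e' eqxx.
Qed.

Lemma avoid_p5 n (pi : {perm 'I_n.+1}) (q w : 'I_n.+1) : pi q = ord_max -> val q = w.+1 ->
  ~~ contains pi p5 = [forall j in [set j : 'I_n.+1 | (j == w) || (q < j)], (pi j : nat) <= pi w].
Proof.
move=> hq /= hw; rewrite containsE3; apply/idP/idP.
- move=> H; apply/forallP => j; apply/implyP; rewrite inE => jP.
  rewrite leqNgt; apply/negP => lt; apply: (negP H).
  have jw : j != w by apply/eqP => e; move: lt; rewrite e ltnn.
  have qj : q < j by move: jP; rewrite (negbTE jw).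
  have jq : j != q by rewrite -val_eqE /= neq_ltn qj orbT.
  have pj := perm_max hq jq.
  apply/existsP; exists w; apply/existsP; exists q; apply/existsP; exists j.
  rewrite occ_p5 hq /=.
  rewrite hw eqxx /=; apply/and3P; split; [apply/andP; split|apply/andP; split|]; lia.
- move=> /forallP H; apply/negP => /existsP [i0 /existsP [i1 /existsP [i2]]].
  rewrite occ_p5 => /and4P [/andP [h01 h12] /andP [p02 p21] /eqP e0 /eqP e1].
  have i1q : i1 = q by apply: (@perm_inj _ pi); apply: val_inj; rewrite hq /=; lia.
  subst i1.
  have i0w : i0 = w by apply: val_inj => /=; move: e0 => /= e0; lia.
  subst i0.
  have := H i2; rewrite inE h12 orbT implyTb; lia.
Qed.

Lemma avoid_p6 n (pi : {perm 'I_n.+1}) (q w : 'I_n.+1) : pi q = ord_max -> val w = q.+1 ->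
  ~~ contains pi p6 = [forall j in [set j : 'I_n.+1 | (j < q) || (j == w)], n - pi j <= n - pi w].
Proof.
move=> hq /= hw; rewrite containsE3; apply/idP/idP.
- move=> H; apply/forallP => j; apply/implyP; rewrite inE => jP.
  rewrite leqNgt; apply/negP => lt; apply: (negP H).
  have jw : j != w by apply/eqP => e; move: lt; rewrite e ltnn.
  have qj : j < q by move: jP; rewrite (negbTE jw) orbF.
  have wq : w != q by rewrite -val_eqE /= hw; lia.
  have pw := perm_max hq wq.
  have pj := ltn_ord (pi j); have pw' := ltn_ord (pi w).
  apply/existsP; exists j; apply/existsP; exists q; apply/existsP; exists w.
  rewrite occ_p6 hq /=.
  rewrite hw eqxx /=; apply/and3P; split; [apply/andP; split|apply/andP; split|]; lia.
- move=> /forallP H; apply/negP => /existsP [i0 /existsP [i1 /existsP [i2]]].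
  rewrite occ_p6 => /and4P [/andP [h01 h12] /andP [p02 p21] /eqP e0 /eqP e1].
  have i1q : i1 = q by apply: (@perm_inj _ pi); apply: val_inj; rewrite hq /=; lia.
  subst i1.
  have i2w : i2 = w by apply: val_inj => /=; move: e0 => /= e0; lia.
  subst i2.
  have := ltn_ord (pi i0); have := ltn_ord (pi w).
  have := H i0; rewrite inE h01 implyTb; lia.
Qed.

Lemma avoid_p7 n (pi : {perm 'I_n.+1}) (q : 'I_n.+1) : pi q = ord_max -> q < n ->
  ~~ contains pi p7 = [forall j in [set j : 'I_n.+1 | (j < q) || (j == ord_max)],
                         n - pi j <= n - pi (ord_max : 'I_n.+1)].
Proof.
move=> hq hqn; set w : 'I_n.+1 := ord_max; rewrite containsE3; apply/idP/idP.
- move=> H; apply/forallP => j; apply/implyP; rewrite inE => jP.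
  rewrite leqNgt; apply/negP => lt; apply: (negP H).
  have jw : j != w by apply/eqP => e; move: lt; rewrite e ltnn.
  have qj : j < q by move: jP; rewrite (negbTE jw) orbF.
  have wq : w != q by rewrite -val_eqE /=; lia.
  have pw := perm_max hq wq.
  have pj := ltn_ord (pi j); have pw' := ltn_ord (pi w).
  apply/existsP; exists j; apply/existsP; exists q; apply/existsP; exists w.
  rewrite occ_p7 hq /=.
  rewrite eqxx /= andbT; apply/andP; split; [apply/andP; split|apply/andP; split]; lia.
- move=> /forallP H; apply/negP => /existsP [i0 /existsP [i1 /existsP [i2]]].
  rewrite occ_p7 => /and4P [/andP [h01 h12] /andP [p02 p21] /eqP e0 /eqP e1].
  have i1q : i1 = q by apply: (@perm_inj _ pi); apply: val_inj; rewrite hq /=; lia.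
  subst i1.
  have i2w : i2 = w by apply: val_inj => /=; move: e0 => /= e0; lia.
  subst i2.
  have := ltn_ord (pi i0); have := ltn_ord (pi w).
  have := H i0; rewrite inE h01 implyTb; lia.
Qed.

Section Harm.
Import Num.Theory.
Local Open Scope ring_scope.
Lemma harm_core n (pc : 'I_n -> nat) :
  (forall c : 'I_n, (pc c * c.+1 = n`!)%N) ->
  ((\sum_(c < n) pc c)%N%:R : rat) = (n`!)%:R * \sum_(1 <= j < n.+1) (j%:R)^-1.
Proof.
move=> H; rewrite natr_sum big_add1 /= big_mkord mulr_sumr; apply: eq_bigr => c _.
have hc : (c.+1%:R : rat) != 0 by rewrite pnatr_eq0.
by rewrite -(H c) natrM mulfK.
Qed.

Lemma harmA n (pc : 'I_n.+1 -> nat) :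
  pc ord_max = n`! -> (forall c : 'I_n.+1, c != ord_max -> (pc c * (n - c) = n`!)%N) ->
  ((\sum_(c < n.+1) pc c)%N%:R : rat) = (n`!)%:R * (1 + \sum_(1 <= j < n.+1) (j%:R)^-1).
Proof.
move=> H0 H; rewrite big_ord_recr /= H0 natrD mulrDr mulr1 addrC; congr (_ + _).
rewrite (reindex_inj rev_ord_inj) /=; apply: harm_core => c.
have hne : widen_ord (leqnSn n) (rev_ord c) != ord_max.
  by rewrite -val_eqE /=; have := ltn_ord c; lia.
rewrite -(H _ hne) /=; congr (_ * _)%N; have := ltn_ord c; lia.
Qed.

Lemma harmB n (pc : 'I_n.+1 -> nat) :
  pc ord_max = n`! -> (forall c : 'I_n.+1, c != ord_max -> (pc c * c.+1 = n`!)%N) ->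
  ((\sum_(c < n.+1) pc c)%N%:R : rat) = (n`!)%:R * (1 + \sum_(1 <= j < n.+1) (j%:R)^-1).
Proof.
move=> H0 H; rewrite big_ord_recr /= H0 natrD mulrDr mulr1 addrC; congr (_ + _).
apply: harm_core => c.
have hne : widen_ord (leqnSn n) c != ord_max.
  by rewrite -val_eqE /=; have := ltn_ord c; lia.
by rewrite -(H _ hne).
Qed.

Lemma harmC n (pc : 'I_n.+1 -> nat) :
  pc ord0 = n`! -> (forall c : 'I_n.+1, c != ord0 -> (pc c * (n.+1 - c) = n`!)%N) ->
  ((\sum_(c < n.+1) pc c)%N%:R : rat) = (n`!)%:R * (1 + \sum_(1 <= j < n.+1) (j%:R)^-1).
Proof.
move=> H0 H; rewrite big_ord_recl /= H0 natrD mulrDr mulr1; congr (_ + _).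
rewrite (reindex_inj rev_ord_inj) /=; apply: harm_core => c.
have hne : lift ord0 (rev_ord c) != ord0 by [].
rewrite -(H _ hne) /=; congr (_ * _)%N; rewrite /bump /=; have := ltn_ord c; lia.
Qed.

End Harm.

Lemma max_avoid_p1 n (pi : {perm 'I_n.+1}) : pi ord0 = ord_max -> ~~ contains pi p1.
Proof.
move=> h; rewrite containsE3; apply/existsP => [[i0 /existsP [i1 /existsP [i2]]]].
rewrite occ_p1 => /and4P [_ /andP [p01 _] /eqP e0 _].
have i00 : i0 = ord0 by apply: val_inj.
by move: p01; rewrite i00 h /= ltnNge -ltnS ltn_ord.
Qed.

Lemma fix_piece_val n (P : pred {perm 'I_n.+1}) :
  (forall pi : {perm 'I_n.+1}, pi ord0 = ord_max -> P pi) ->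
  #|[set pi | P pi && (pi ord0 == ord_max)]| = n`!.
Proof.
move=> H; rewrite -(card_fix_val ord0 ord_max); apply: eq_card => pi; rewrite !inE.
by case e: (pi ord0 == ord_max); rewrite ?andbF ?andbT // H // (eqP e).
Qed.

Lemma count_p1 n : ((avoiders_count p1 n.+1)%:R : rat)%R =
   ((n`!)%:R * (1 + \sum_(1 <= j < n.+1) (j%:R)^-1))%R.
Proof.
rewrite /avoiders_count (split_val (fun pi => ~~ contains pi p1)).
apply: harmA; first by apply: fix_piece_val => pi; exact: max_avoid_p1.
move=> c hc.
have hcn : c < n by move: hc; rewrite -val_eqE /=; have := ltn_ord c; lia.
pose w : 'I_n.+1 := inord c.+1.
have hw : val w = c.+1 by rewrite /= inordK.
rewrite -(card_gt c).
apply: (@piece_val n (fun pi => ~~ contains pi p1) c w _ (fun x => x)).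
- by rewrite inE hw.
- by rewrite inE ltnn.
- by move=> x y _ _.
- move=> pi hpi; exact: avoid_p1 hpi hw.
Qed.

Lemma max_avoid_p3 n (pi : {perm 'I_n.+1}) : pi ord0 = ord_max -> ~~ contains pi p3.
Proof.
move=> h; rewrite containsE3; apply/existsP => [[i0 /existsP [i1 /existsP [i2]]]].
rewrite occ_p3 => /and4P [_ /andP [p01 _] /eqP e0 _].
have i00 : i0 = ord0 by apply: val_inj.
by move: p01; rewrite i00 h /= ltnNge -ltnS ltn_ord.
Qed.

Lemma empty_forall n (P : pred 'I_n.+1) : [forall v in [set v : 'I_n.+1 | (ord_max : 'I_n.+1) < v], P v].
Proof. by apply/forallP => v; rewrite inE /= ltnNge -ltnS ltn_ord. Qed.

Lemma count_p2 n : ((avoiders_count p2 n.+1)%:R : rat)%R =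
   ((n`!)%:R * (1 + \sum_(1 <= j < n.+1) (j%:R)^-1))%R.
Proof.
rewrite /avoiders_count (split_val (fun pi => ~~ contains pi p2)).
apply: harmA; first by apply: fix_piece_val => pi h; rewrite (avoid_p2 h) empty_forall.
move=> c hc.
have hcn : c < n by move: hc; rewrite -val_eqE /=; have := ltn_ord c; lia.
rewrite -(card_gt c).
apply: (@piece_val n (fun pi => ~~ contains pi p2) c ord_max _ (fun x => n - x)).
- by rewrite inE.
- by rewrite inE ltnn.
- by move=> x y hx hy; lia.
- move=> pi hpi; exact: avoid_p2 hpi.
Qed.

Lemma count_p3 n : ((avoiders_count p3 n.+1)%:R : rat)%R =
   ((n`!)%:R * (1 + \sum_(1 <= j < n.+1) (j%:R)^-1))%R.
Proof.
rewrite /avoiders_count (split_val (fun pi => ~~ contains pi p3)).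
apply: harmA; first by apply: fix_piece_val => pi; exact: max_avoid_p3.
move=> c hc.
have hcn : c < n by move: hc; rewrite -val_eqE /=; have := ltn_ord c; lia.
pose w : 'I_n.+1 := inord c.+1.
have hw : val w = c.+1 by rewrite /= inordK.
rewrite -(card_gt c).
apply: (@piece_val n (fun pi => ~~ contains pi p3) c w _ (fun x => n - x)).
- by rewrite inE hw.
- by rewrite inE ltnn.
- by move=> x y hx hy; lia.
- move=> pi hpi; exact: avoid_p3 hpi hw.
Qed.

Lemma count_p4 n : ((avoiders_count p4 n.+1)%:R : rat)%R =
   ((n`!)%:R * (1 + \sum_(1 <= j < n.+1) (j%:R)^-1))%R.
Proof.
rewrite /avoiders_count (split_val (fun pi => ~~ contains pi p4)).
apply: harmA; first by apply: fix_piece_val => pi h; rewrite (avoid_p4 h) empty_forall.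
move=> c hc.
have hcn : c < n by move: hc; rewrite -val_eqE /=; have := ltn_ord c; lia.
rewrite -(card_gt c).
apply: (@piece_val n (fun pi => ~~ contains pi p4) c ord_max _ (fun x => x)).
- by rewrite inE.
- by rewrite inE ltnn.
- by move=> x y hx hy.
- move=> pi hpi; exact: avoid_p4 hpi.
Qed.

Lemma fix_piece_pos n (P : pred {perm 'I_n.+1}) (c : 'I_n.+1) :
  (forall pi : {perm 'I_n.+1}, pi c = ord_max -> P pi) ->
  #|[set pi | P pi && (pi c == ord_max)]| = n`!.
Proof.
move=> H; rewrite -(card_fix_pos c ord_max); apply: eq_card => pi; rewrite !inE.
by case e: (pi c == ord_max); rewrite ?andbF ?andbT // H // (eqP e).
Qed.

Lemma max_avoid_p5 n (pi : {perm 'I_n.+1}) : pi ord0 = ord_max -> ~~ contains pi p5.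
Proof.
move=> h; rewrite containsE3; apply/existsP => [[i0 /existsP [i1 /existsP [i2]]]].
rewrite occ_p5 => /and4P [/andP [h01 _] _ _ /eqP e1].
have : i1 = ord0 by apply: (@perm_inj _ pi); apply: val_inj; rewrite h /=; lia.
by move=> e; move: h01; rewrite e.
Qed.

Lemma max_avoid_p6 n (pi : {perm 'I_n.+1}) : pi ord_max = ord_max -> ~~ contains pi p6.
Proof.
move=> h; rewrite containsE3; apply/existsP => [[i0 /existsP [i1 /existsP [i2]]]].
rewrite occ_p6 => /and4P [/andP [_ h12] _ _ /eqP e1].
have : i1 = ord_max by apply: (@perm_inj _ pi); apply: val_inj; rewrite h /=; lia.
by move=> e; move: h12; rewrite e /= ltnNge -ltnS ltn_ord.
Qed.

Lemma max_avoid_p7 n (pi : {perm 'I_n.+1}) : pi ord_max = ord_max -> ~~ contains pi p7.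
Proof.
move=> h; rewrite containsE3; apply/existsP => [[i0 /existsP [i1 /existsP [i2]]]].
rewrite occ_p7 => /and4P [/andP [_ h12] _ _ /eqP e1].
have : i1 = ord_max by apply: (@perm_inj _ pi); apply: val_inj; rewrite h /=; lia.
by move=> e; move: h12; rewrite e /= ltnNge -ltnS ltn_ord.
Qed.

Lemma count_p5 n : ((avoiders_count p5 n.+1)%:R : rat)%R =
   ((n`!)%:R * (1 + \sum_(1 <= j < n.+1) (j%:R)^-1))%R.
Proof.
rewrite /avoiders_count (split_pos (fun pi => ~~ contains pi p5)).
apply: harmC; first by apply: fix_piece_pos => pi; exact: max_avoid_p5.
move=> q hq.
have hq0 : 0 < q by move: hq; rewrite -val_eqE /=; lia.
pose w : 'I_n.+1 := inord q.-1.
have hw : (w : nat) = q.-1 by rewrite /= inordK //; have := ltn_ord q; lia.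
have hqw : (q : nat) = w.+1 by rewrite hw; lia.
have -> : (n.+1 - q = #|[set j : 'I_n.+1 | (j == w) || (q < j)]|)%N.
  have -> : [set j : 'I_n.+1 | (j == w) || (q < j)] = w |: [set j : 'I_n.+1 | q < j].
    by apply/setP => j; rewrite !inE.
  rewrite cardsU1 card_gt inE hqw ltnNge leqnSn /=; have := ltn_ord q; lia.
apply: (@piece_pos n (fun pi => ~~ contains pi p5) q w _ (fun x => x)).
- by rewrite inE eqxx.
- by rewrite inE ltnn orbF -val_eqE /= hqw; lia.
- by move=> x y hx hy.
- move=> pi hpi; exact: avoid_p5 hpi hqw.
Qed.

Lemma count_p6 n : ((avoiders_count p6 n.+1)%:R : rat)%R =
   ((n`!)%:R * (1 + \sum_(1 <= j < n.+1) (j%:R)^-1))%R.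
Proof.
rewrite /avoiders_count (split_pos (fun pi => ~~ contains pi p6)).
apply: harmB; first by apply: fix_piece_pos => pi; exact: max_avoid_p6.
move=> q hq.
have hqn : q < n by move: hq; rewrite -val_eqE /=; have := ltn_ord q; lia.
pose w : 'I_n.+1 := inord q.+1.
have hw : (w : nat) = q.+1 by rewrite /= inordK.
have -> : (q.+1 = #|[set j : 'I_n.+1 | (j < q) || (j == w)]|)%N.
  have -> : [set j : 'I_n.+1 | (j < q) || (j == w)] = w |: [set j : 'I_n.+1 | j < q].
    by apply/setP => j; rewrite !inE orbC.
  rewrite cardsU1 card_lt ?inE ?hw ?ltnNge ?leqnSn //=; lia.
apply: (@piece_pos n (fun pi => ~~ contains pi p6) q w _ (fun x => n - x)).
- by rewrite inE eqxx orbT.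
- by rewrite inE ltnn /= -val_eqE /= hw; lia.
- by move=> x y hx hy; lia.
- move=> pi hpi; exact: avoid_p6 hpi hw.
Qed.

Lemma count_p7 n : ((avoiders_count p7 n.+1)%:R : rat)%R =
   ((n`!)%:R * (1 + \sum_(1 <= j < n.+1) (j%:R)^-1))%R.
Proof.
rewrite /avoiders_count (split_pos (fun pi => ~~ contains pi p7)).
apply: harmB; first by apply: fix_piece_pos => pi; exact: max_avoid_p7.
move=> q hq.
have hqn : q < n by move: hq; rewrite -val_eqE /=; have := ltn_ord q; lia.
pose w : 'I_n.+1 := ord_max.
have -> : (q.+1 = #|[set j : 'I_n.+1 | (j < q) || (j == w)]|)%N.
  have -> : [set j : 'I_n.+1 | (j < q) || (j == w)] = w |: [set j : 'I_n.+1 | j < q].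
    by apply/setP => j; rewrite !inE orbC.
  rewrite cardsU1 card_lt ?inE /= ?ltnNge; [|lia]; rewrite (ltnW hqn) /=; lia.
apply: (@piece_pos n (fun pi => ~~ contains pi p7) q w _ (fun x => n - x)).
- by rewrite inE eqxx orbT.
- by rewrite inE ltnn /= -val_eqE /=; lia.
- by move=> x y hx hy; lia.
- move=> pi hpi; exact: avoid_p7 hpi hqn.
Qed.

Local Open Scope ring_scope.

Theorem mainTheorem10 (p0 p : bvpat 3) (n : nat) :
  p0 \in base_patterns -> in_sym_class p0 p -> (1 <= n)%N ->
  ((avoiders_count p n)%:R : rat) =
    ((n.-1)`!)%:R * (1 + \sum_(1 <= j < n) (j%:R)^-1).
Proof.
move=> hp0 hcl; case: n => [//|n] _ /=.
rewrite (count_class n.+1 hcl).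
move: hp0; rewrite /base_patterns !inE.
case/orP => [/eqP ->|]; first exact: count_p1.
case/orP => [/eqP ->|]; first exact: count_p2.
case/orP => [/eqP ->|]; first exact: count_p3.
case/orP => [/eqP ->|]; first exact: count_p4.
case/orP => [/eqP ->|]; first exact: count_p5.
case/orP => [/eqP ->|]; first exact: count_p6.
move/eqP => ->; exact: count_p7.
Qed.
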